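(* For every instance $(d,\mathcal{C},k)$ of $k$-center and every execution of the reverse greedy algorithm on it (with any tie-breaking), the returned set $F_{n-k}$ satisfies $\mathrm{cost}(F_{n-k})\le 2k\cdot\mathrm{OPT}$; i.e., reverse greedy is a $2k$-approximation for $k$-center.
   Context: An instance of $k$-center consists of a finite metric space $(d,\mathcal{C})$ with $|\mathcal{C}|=n$ and an integer $k\ge 1$ with $k\le n$; every point is both a client and a potential facility. For nonempty $F\subseteq\mathcal{C}$, $d(c,F):=\min_{f\in F}d(c,f)$ and $\mathrm{cost}(F):=\max_{c\in\mathcal{C}}d(c,F)$; $\mathrm{OPT}$ is the minimum of $\mathrm{cost}(F)$ over $F\subseteq\mathcal{C}$ with $|F|\le k$. Reverse greedy: $F_0:=\mathcal{C}$, and for $i=1,\dots,n-k$, $F_i:=F_{i-1}\setminus\{f_i\}$ where $f_i\in\arg\min_{f\in F_{i-1}}\mathrm{cost}(F_{i-1}\setminus\{f\})$, ties broken arbitrarily; output $F_{n-k}$. *)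

(* Defs.v *)
From HB Require Import structures.
From mathcomp Require Import all_boot all_order all_algebra.
Set Implicit Arguments. Unset Strict Implicit. Unset Printing Implicit Defensive.
Import Order.TTheory GRing.Theory Num.Theory.
Local Open Scope ring_scope.

Section KCenter.
Variables (R : realFieldType) (T : finType).

(* metric axioms on the finite point set T (clients = facilities = T) *)
Definition is_metric (d : T -> T -> R) : Prop :=
  [/\ forall x y, 0 <= d x y,
      forall x y, d x y = 0 <-> x = y,
      forall x y, d x y = d y x
    & forall x y z, d x z <= d x y + d y z].

(* the diameter; used only as the neutral element of the min below, so that
   for nonempty F the min is the true minimum *)
Definition diam (d : T -> T -> R) : R :=
  \big[Num.max/0]_(x : T) \big[Num.max/0]_(y : T) d x y.

Definition distF (d : T -> T -> R) (F : {set T}) (c : T) : R :=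
  \big[Num.min/diam d]_(f in F) d c f.

Definition cost (d : T -> T -> R) (F : {set T}) : R :=
  \big[Num.max/0]_(c : T) distF d F c.

Definition OPT (d : T -> T -> R) (k : nat) : R :=
  \big[Num.min/diam d]_(F : {set T} | (0 < #|F|)%N && (#|F| <= k)%N) cost d F.

Definition rg_step (d : T -> T -> R) (Fprev Fnext : {set T}) : Prop :=
  exists2 f, f \in Fprev &
    Fnext = Fprev :\ f /\
    (forall g, g \in Fprev -> cost d (Fprev :\ f) <= cost d (Fprev :\ g)).

Definition rg_run (d : T -> T -> R) (k : nat) (Fs : nat -> {set T}) : Prop :=
  Fs 0%N = [set: T] /\
  forall i, (i < #|T| - k)%N -> rg_step d (Fs i) (Fs i.+1).

End KCenter.

(* Main.v *)
Require Import Defs.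
From mathcomp Require Import all_boot all_order all_algebra.
From mathcomp Require Import zify.
Import Order.TTheory GRing.Theory Num.Theory.
Local Open Scope ring_scope.
Set Implicit Arguments. Unset Strict Implicit.

Section Helpers.
Variables (R : realFieldType) (T : finType) (d : T -> T -> R).
Hypothesis md : is_metric d.

Lemma d_ge0 x y : 0 <= d x y.
Proof. by case: md. Qed.
Lemma d_sym x y : d x y = d y x.
Proof. by case: md. Qed.
Lemma d_tri x y z : d x z <= d x y + d y z.
Proof. by case: md. Qed.

Lemma diam_ge x y : d x y <= diam d.
Proof.
rewrite /diam (bigD1 x) //= le_max; apply/orP; left.
by rewrite (bigD1 y) //= le_max lexx.
Qed.

Lemma diam_ge0 : 0 <= diam d.
Proof.
rewrite /diam; apply: (big_ind (fun v => 0 <= v)) => //.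
- by move=> a b Ha Hb; rewrite le_max Ha.
move=> x _; apply: (big_ind (fun v => 0 <= v)) => //.
- by move=> a b Ha Hb; rewrite le_max Ha.
by move=> y _; apply: d_ge0.
Qed.

Lemma distF_le (F : {set T}) (c f : T) : f \in F -> distF d F c <= d c f.
Proof. by move=> fF; rewrite /distF (bigD1 f) //= ge_min lexx. Qed.

Lemma distF_le_diam (F : {set T}) (c : T) : distF d F c <= diam d.
Proof.
rewrite /distF; apply: (big_ind (fun v => v <= diam d)) => //.
- by move=> a b Ha Hb; rewrite ge_min Ha.
by move=> f _; apply: diam_ge.
Qed.

Lemma distF_attained (F : {set T}) (c f0 : T) : f0 \in F ->
  exists2 f, f \in F & d c f <= distF d F c.
Proof.
move=> f0F.
have : distF d F c = diam d \/ exists2 f, f \in F & distF d F c = d c f.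
  rewrite /distF; apply: (big_ind (fun v => v = diam d \/ exists2 f, f \in F & v = d c f)).
  - by left.
  - by move=> a b Ha Hb; rewrite minEle; case: ifP.
  by move=> f fF; right; exists f.
case=> [E | [f fF ->]]; last by exists f.
exists f0 => //; rewrite E; apply: diam_ge.
Qed.

Lemma cost_ge (F : {set T}) (c : T) : distF d F c <= cost d F.
Proof. by rewrite /cost (bigD1 c) //= le_max lexx. Qed.

Lemma cost_le (F : {set T}) x : 0 <= x -> (forall c, distF d F c <= x) -> cost d F <= x.
Proof.
move=> x0 H; rewrite /cost; apply: (big_ind (fun v => v <= x)) => //.
by move=> a b Ha Hb; rewrite ge_max Ha Hb.
Qed.

Lemma distF_ge0 (F : {set T}) c : 0 <= distF d F c.
Proof.
rewrite /distF; apply: (big_ind (fun v => 0 <= v)).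
- exact: diam_ge0.
- by move=> a b Ha Hb; rewrite le_min Ha Hb.
by move=> f _; apply: d_ge0.
Qed.

Lemma cost_ge0 (F : {set T}) : 0 <= cost d F.
Proof.
rewrite /cost; apply: (big_ind (fun v => 0 <= v)) => //.
- by move=> a b Ha Hb; rewrite le_max Ha.
by move=> c _; apply: distF_ge0.
Qed.

Lemma OPT_attained k (t : T) : (1 <= k)%N ->
  exists O : {set T}, [/\ (0 < #|O|)%N, (#|O| <= k)%N & cost d O <= OPT d k].
Proof.
move=> k1; rewrite /OPT.
apply: (big_ind (fun v => exists O : {set T}, [/\ (0 < #|O|)%N, (#|O| <= k)%N & cost d O <= v])).
- exists [set t]; rewrite cards1; split => //.
  apply: cost_le; first exact: diam_ge0.
  by move=> c; apply: distF_le_diam.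
- move=> a b [O1 [h1 h2 h3]] [O2 [h4 h5 h6]]; rewrite minEle; case: ifP => _.
  + by exists O1.
  + by exists O2.
move=> O /andP[h1 h2]; exists O; split => //.
Qed.

Definition Good (S : {set T}) (x : R) := forall c, exists2 o, o \in S & d c o <= x.

Lemma Good_mono S x y : x <= y -> Good S x -> Good S y.
Proof. move=> xy H c; case: (H c) => o oS h; exists o => //; exact: le_trans xy. Qed.

Lemma arith (r : R) a b : 0 <= r -> (a + 1 <= b)%N -> r * a%:R + r <= r * b%:R.
Proof.
move=> r0 ab; apply: (@le_trans _ _ (r * (a + 1)%:R)).
  by rewrite natrD mulrDr mulr1.
by rewrite ler_wpM2l // ler_nat.
Qed.

Variables (O : {set T}) (r : R) (sig : T -> T).
Hypothesis sigO : forall c, sig c \in O.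
Hypothesis sigr : forall c, d c (sig c) <= r.
Hypothesis r0 : 0 <= r.

Lemma L1 (F : {set T}) x : 0 <= x -> Good (sig @: F) x -> cost d F <= x + r.
Proof.
move=> x0 H; apply: cost_le.
  by rewrite addr_ge0.
move=> c; case: (H c) => o /imsetP[f fF ->] h.
apply: le_trans (distF_le c fF) _.
apply: le_trans (d_tri c (sig f) f) _.
by rewrite lerD // d_sym.
Qed.

Lemma pigeon (F : {set T}) : (#|sig @: F| < #|F|)%N ->
  exists2 f, f \in F & sig @: (F :\ f) = sig @: F.
Proof.
move=> lt.
case: (boolP [exists f in F, exists g in F, (f != g) && (sig f == sig g)]).
  move/existsP => [f /andP[fF /existsP [g /andP[gF /andP[fg /eqP e]]]]].
  exists f => //; apply/setP => o; apply/imsetP/imsetP.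
    by case=> x /setD1P[_ xF] ->; exists x.
  case=> x xF ->; case: (eqVneq x f) => [-> | xf].
    exists g; last by [].
    by apply/setD1P; split => //; rewrite eq_sym.
  by exists x => //; apply/setD1P.
move=> H; exfalso.
have inj : {in F &, injective sig}.
  move=> x y xF yF e; apply/eqP; apply: contraNT H => xy.
  apply/existsP; exists x; rewrite xF /=; apply/existsP; exists y.
  by rewrite yF xy e eqxx.
by move: lt; rewrite (card_in_imset inj) ltnn.
Qed.

Lemma imset_sub (F : {set T}) : sig @: F \subset O.
Proof. by apply/subsetP => o /imsetP[f _ ->]. Qed.

Lemma L2 (F F' : {set T}) x : rg_step d F F' -> (#|O| < #|F|)%N -> 0 <= x ->
  Good (sig @: F) x -> cost d F' <= x + r.
Proof.
move=> [f0 f0F [-> Hmin]] lt x0 G.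
have lt' : (#|sig @: F| < #|F|)%N.
  by apply: leq_ltn_trans lt; apply: subset_leq_card; apply: imset_sub.
case: (pigeon lt') => f fF e.
apply: le_trans (Hmin f fF) _.
by apply: L1 => //; rewrite e.
Qed.

Lemma L3 (F : {set T}) f0 : f0 \in F -> Good (sig @: F) (cost d F + r).
Proof.
move=> f0F c; case: (distF_attained c f0F) => g gF h.
exists (sig g); first exact: imset_f.
apply: le_trans (d_tri c g (sig g)) _.
by rewrite lerD // (le_trans h) // cost_ge.
Qed.

End Helpers.
Unset Implicit Arguments.

Theorem lemma2 (R : realFieldType) (T : finType) (d : T -> T -> R) (k : nat)
  (Fs : nat -> {set T}) :
  is_metric d -> (1 <= k)%N -> (k <= #|T|)%N ->
  rg_run d k Fs ->
  cost d (Fs (#|T| - k)%N) <= (2 * k)%:R * OPT d k.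
Proof.
move=> md k1 kn [F0 Hrun].
have [t _] : exists t : T, t \in T.
  by apply/card_gt0P; apply: leq_trans kn.
set r := OPT d k.
case: (OPT_attained md t k1) => O [O0 Ok Or].
have r0 : 0 <= r by apply: le_trans Or; apply: cost_ge0.
case/card_gt0P: O0 => o0 o0O.
pose sig c := odflt c [pick o in O | d c o <= r].
have sigP : forall c, sig c \in O /\ d c (sig c) <= r.
  move=> c; rewrite /sig; case: pickP => [o /andP[h1 h2] | H] //=.
  exfalso; case: (distF_attained d c o0O) => o oO h.
  move: (H o); rewrite oO /=.
  by rewrite (le_trans h) // (le_trans _ Or) // cost_ge.
have sigO : forall c, sig c \in O by move=> c; case: (sigP c).
have sigr : forall c, d c (sig c) <= r by move=> c; case: (sigP c).
have card : forall i, (i <= #|T| - k)%N -> #|Fs i| = (#|T| - i)%N.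
  elim=> [|i IH] hi; first by rewrite F0 cardsT subn0.
  have hi' : (i < #|T| - k)%N by [].
  case: (Hrun i hi') => f fF [-> _].
  move: (cardsD1 f (Fs i)); rewrite fF IH; last by apply: ltnW.
  move=> e; lia.
have inv : forall i, (i <= #|T| - k)%N ->
    Good d (sig @: Fs i) (r * (2 * (#|O| - #|sig @: Fs i|) + 1)%:R).
  elim=> [|i IH] hi.
    rewrite F0 => c; exists (sig c); first exact: imset_f.
    apply: le_trans (sigr c) _.
    by rewrite -{1}(mulr1 r) ler_wpM2l // ler1n; lia.
  have hi' : (i < #|T| - k)%N by [].
  have G := IH (ltnW hi').
  have cFi : #|Fs i| = (#|T| - i)%N by apply: card; apply: ltnW.
  have cFi1 : #|Fs i.+1| = (#|T| - i.+1)%N by apply: card.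
  have step := Hrun i hi'.
  have sub : sig @: Fs i.+1 \subset sig @: Fs i.
    case: step => f fF [-> _]; apply: imsetS; apply: subsetDl.
  have x0 : 0 <= r * (2 * (#|O| - #|sig @: Fs i|) + 1)%:R by rewrite mulr_ge0.
  case: (eqVneq (sig @: Fs i.+1) (sig @: Fs i)) => [-> | ne] //.
  have lt : (#|sig @: Fs i.+1| < #|sig @: Fs i|)%N.
    by apply: proper_card; rewrite properEneq ne sub.
  have leO : (#|sig @: Fs i| <= #|O|)%N by apply: subset_leq_card; apply: imset_sub.
  have c1 := L2 md sigO sigr r0 step.
  have : (#|O| < #|Fs i|)%N by rewrite cFi; lia.
  move=> /c1 /(_ x0 G) hc.
  have [f1 f1F] : exists f, f \in Fs i.+1 by apply/card_gt0P; rewrite cFi1; lia.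
  apply: (Good_mono _ (L3 md sigr f1F)).
  apply: le_trans (lerD hc (lexx r)) _.
  rewrite -addrA.
  apply: le_trans (arith r0 (_ : (2 * (#|O| - #|sig @: Fs i|) + 1 + 1 + 1 <= _)%N)).
    by rewrite !natrD !mulrDr !mulr1 !addrA.
  move: lt leO; lia.
have G := inv _ (leqnn _).
have cF : #|Fs (#|T| - k)%N| = k by rewrite card //; lia.
have [f1 f1F] : exists f, f \in Fs (#|T| - k)%N by apply/card_gt0P; rewrite cF; lia.
have S1 : (0 < #|sig @: Fs (#|T| - k)%N|)%N by apply/card_gt0P; exists (sig f1); exact: imset_f.
have leO : (#|sig @: Fs (#|T| - k)%N| <= #|O|)%N by apply: subset_leq_card; apply: imset_sub.
apply: le_trans (L1 md sigr r0 _ G) _; first by rewrite mulr_ge0.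
rewrite [(2 * k)%:R * _]mulrC; apply: (arith r0); move: S1 leO; lia.
Qed.
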